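(* Let $G=(V,E)$ be a connected almost bipartite permutation graph that contains a hole, let $C$ be a shortest hole of $G$, $m=|C|$, and let $c_0,\dots,c_{m-1}$ be the vertices of $C$ in cyclic order (indices modulo $m$). For each $i$ let $A_i=\{v\in V: N(v)\cap C=\{c_{i-1},c_{i+1}\}\}$ and $B_i=\{v\in V: N(v)\cap C=\{c_i\}\}$ (indices of $A,B$ modulo $m$). Then for every $i\in\{0,\dots,m-1\}$: (1) $A_i$ and $B_i$ are independent sets; (2) for every $u\in A_i$ and every $w\in B_i$ we have $uw\in E$; (3) for every $u\in A_i$ we have $B_i\subseteq N(u)\subseteq B_{i-2}\cup A_{i-1}\cup B_i\cup A_{i+1}\cup B_{i+2}$; (4) for every $w\in B_i$ we have $A_i\subseteq N(w)\subseteq A_{i-2}\cup B_{i-1}\cup A_i\cup B_{i+1}\cup A_{i+2}$.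
   Context: All graphs are finite, simple, undirected; $N(v)$ is the open neighborhood of $v$. A hole is an induced cycle on at least five vertices. $K_3$ is the triangle, $C_k$ the cycle on $k$ vertices. $T_2$ is the tree on 7 vertices obtained from the claw $K_{1,3}$ by subdividing each edge once. $X_2$ is the 7-vertex graph obtained from a 4-cycle by attaching one new pendant vertex to each of three of its four vertices. $X_3$ is the 7-vertex graph obtained from the domino (two 4-cycles sharing exactly one edge) by attaching one new pendant vertex to one endpoint of the shared edge. A graph is an almost bipartite permutation graph if it contains none of $T_2, X_2, X_3, K_3, C_5,\dots,C_9$ as an induced subgraph. *)

(* Defs.v *)
From mathcomp Require Import all_boot.
Set Implicit Arguments. Unset Strict Implicit. Unset Printing Implicit Defensive.

Definition simple_graph (T : finType) (e : rel T) : Prop :=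
  symmetric e /\ irreflexive e.

Definition connected_graph (T : finType) (e : rel T) : Prop :=
  forall x y : T, connect e x y.

Definition nbhd (T : finType) (e : rel T) (v : T) : {set T} := [set x | e v x].

Definition induced_sub (n : nat) (h : rel 'I_n) (T : finType) (e : rel T) : Prop :=
  exists f : 'I_n -> T, injective f /\ forall x y, e (f x) (f y) = h x y.

Definition cycle_rel (k : nat) : rel 'I_k :=
  fun i j => ((i.+1 %% k) == j) || ((j.+1 %% k) == i).

Definition edge_list_rel (n : nat) (l : seq (nat * nat)) : rel 'I_n :=
  fun i j => ((nat_of_ord i, nat_of_ord j) \in l) || ((nat_of_ord j, nat_of_ord i) \in l).

(* T2: claw with centre 0, leaves 1,2,3, each edge subdivided (4,5,6). *)
Definition T2_rel : rel 'I_7 :=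
  @edge_list_rel 7 [:: (0,4); (4,1); (0,5); (5,2); (0,6); (6,3)].
(* X2: 4-cycle 0-1-2-3-0 with pendants 4 at 0, 5 at 1, 6 at 2. *)
Definition X2_rel : rel 'I_7 :=
  @edge_list_rel 7 [:: (0,1); (1,2); (2,3); (3,0); (0,4); (1,5); (2,6)].
(* X3: domino = 4-cycles 0-1-2-3-0 and 1-4-5-2-1 sharing edge 12;
   pendant 6 attached to 1 (an endpoint of the shared edge). *)
Definition X3_rel : rel 'I_7 :=
  @edge_list_rel 7 [:: (0,1); (1,2); (2,3); (3,0); (1,4); (4,5); (5,2); (1,6)].

Definition almost_bip_perm (T : finType) (e : rel T) : Prop :=
  ~ induced_sub T2_rel e /\ ~ induced_sub X2_rel e /\ ~ induced_sub X3_rel e /\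
  ~ induced_sub (@cycle_rel 3) e /\
  (forall k, 5 <= k <= 9 -> ~ induced_sub (@cycle_rel k) e).

Definition is_hole (T : finType) (e : rel T) (m : nat) (c : nat -> T) : Prop :=
  5 <= m /\
  (forall i j, i < m -> j < m -> c i = c j -> i = j) /\
  (forall i j, i < m -> j < m ->
     e (c i) (c j) = ((i.+1 %% m) == j) || ((j.+1 %% m) == i)).

Definition shortest_hole (T : finType) (e : rel T) (m : nat) (c : nat -> T) : Prop :=
  is_hole e m c /\ forall m' c', is_hole e m' c' -> m <= m'.

Definition hole_set (T : finType) (m : nat) (c : nat -> T) : {set T} :=
  [set v | [exists i : 'I_m, c i == v]].

Definition cv (T : finType) (m : nat) (c : nat -> T) (k : nat) : T := c (k %% m).

(* A_i = {v : N(v) ∩ C = {c_(i-1), c_(i+1)}} ; i - 1 computed as i + m - 1 mod m *)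
Definition Aset (T : finType) (e : rel T) (m : nat) (c : nat -> T) (i : nat) : {set T} :=
  [set v | nbhd e v :&: hole_set m c == [set cv m c (i + m - 1); cv m c i.+1]].

Definition Bset (T : finType) (e : rel T) (m : nat) (c : nat -> T) (i : nat) : {set T} :=
  [set v | nbhd e v :&: hole_set m c == [set cv m c i]].

Definition independent (T : finType) (e : rel T) (S : {set T}) : Prop :=
  forall u v, u \in S -> v \in S -> ~~ e u v.

(* Main.v *)
Require Import Defs.
From mathcomp Require Import all_boot.
From mathcomp Require Import zify.
Set Implicit Arguments. Unset Strict Implicit. Unset Printing Implicit Defensive.

Definition nchk (n : nat) (hn : nat -> nat -> bool) :=
  all (fun a => all (fun b => (hn a b == hn b a) && ((a == b) ==> ~~ hn a b) &&
     ((a == b) || has (fun c => hn a c != hn b c) (iota 0 n))) (iota 0 n)) (iota 0 n).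

Lemma mk_induced n (h : rel 'I_n) (hn : nat -> nat -> bool) (T : finType) (e : rel T) (f : 'I_n -> T) :
  simple_graph e -> (forall a b : 'I_n, h a b = hn a b) -> nchk n hn ->
  (forall a b : 'I_n, a < b -> e (f a) (f b) = h a b) -> induced_sub h e.
Proof.
case=> es ei hE /allP chk H.
have P a b : a < n -> b < n -> [/\ hn a b = hn b a, (a == b) ==> ~~ hn a b &
     ((a == b) || has (fun c => hn a c != hn b c) (iota 0 n))].
  move=> an bn; move: (chk a); rewrite mem_iota add0n an => /(_ isT) /allP /(_ b).
  by rewrite mem_iota add0n bn => /(_ isT) /andP [/andP [/eqP -> ->] ->].
have Hall : forall a b, e (f a) (f b) = h a b.
  move=> a b; case: (ltngtP a b) => [/H //|ba|/val_inj ->].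
  - by rewrite es H // !hE; case: (P a b) => //.
  - by rewrite ei hE; case: (P b b) => // _; rewrite eqxx /= => /negbTE ->.
exists f; split=> // a b fab; apply/eqP; apply: contraT => nab.
case: (P a b) => // _ _; rewrite (negbTE (nab : (a:nat) != b)) /= => /hasP [c].
rewrite mem_iota add0n /= => cn.
by rewrite -[c]/(nat_of_ord (Ordinal cn)) -!hE -!Hall fab eqxx.
Qed.

Definition eln (l : seq (nat * nat)) a b := ((a, b) \in l) || ((b, a) \in l).
Definition cyn k a b := (a.+1 %% k == b) || (b.+1 %% k == a).

Lemma t2ok : nchk 7 (eln [:: (0,4); (4,1); (0,5); (5,2); (0,6); (6,3)]).
Proof. by []. Qed.
Lemma x2ok : nchk 7 (eln [:: (0,1); (1,2); (2,3); (3,0); (0,4); (1,5); (2,6)]).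
Proof. by []. Qed.
Lemma c3ok : nchk 3 (cyn 3). Proof. by []. Qed.
Lemma c5ok : nchk 5 (cyn 5). Proof. by []. Qed.


Lemma cv_eq (T : finType) m (c : nat -> T) x y : x %% m = y %% m -> cv m c x = cv m c y.
Proof. by rewrite /cv => ->. Qed.

Lemma cv_shift (T : finType) m (c : nat -> T) n x y : x = y + n * m -> cv m c x = cv m c y.
Proof. by move=> ->; apply: cv_eq; rewrite addnC modnMDl. Qed.

Lemma hole_m (T : finType) (e : rel T) m c : is_hole e m c -> 5 <= m.
Proof. by case. Qed.

Lemma cv_inj (T : finType) (e : rel T) m c x y : is_hole e m c ->
  cv m c x = cv m c y -> x %% m = y %% m.
Proof.
move=> H; have m0 : 0 < m by have := hole_m H; lia.
case: H => _ [Hi _]; apply: Hi; exact: ltn_pmod.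
Qed.

Lemma cv_injD (T : finType) (e : rel T) m c j a b : is_hole e m c -> a < m -> b < m ->
  (cv m c (j + a) == cv m c (j + b)) = (a == b).
Proof.
move=> H am bm; apply/eqP/eqP => [/(cv_inj H) /eqP|-> //].
by rewrite eqn_modDl !modn_small // => /eqP.
Qed.

Lemma modSm m x : (x %% m).+1 %% m = x.+1 %% m.
Proof. by rewrite -(addn1 (x %% m)) -(addn1 x) modnDml. Qed.

Lemma cv_adj (T : finType) (e : rel T) m c x y : is_hole e m c ->
  e (cv m c x) (cv m c y) = (x.+1 %% m == y %% m) || (y.+1 %% m == x %% m).
Proof.
move=> H; have m0 : 0 < m by have := hole_m H; lia.
case: H => _ [_ Ha]; rewrite /cv Ha ?ltn_pmod // !modSm //.
Qed.

Lemma cv_adj_off (T : finType) (e : rel T) m c j a b : is_hole e m c -> a < m -> b < m ->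
  e (cv m c (j + a)) (cv m c (j + b)) = (a.+1 %% m == b) || (b.+1 %% m == a).
Proof.
move=> H am bm; rewrite (cv_adj _ _ H) -!addnS !eqn_modDl.
by rewrite (modn_small am) (modn_small bm).
Qed.

Lemma cv_adjD (T : finType) (e : rel T) m c j a b : is_hole e m c -> a.+1 < m -> b.+1 < m ->
  e (cv m c (j + a)) (cv m c (j + b)) = (a.+1 == b) || (b.+1 == a).
Proof.
move=> H am bm; rewrite (cv_adj_off _ H) ?(modn_small am) ?(modn_small bm) //; lia.
Qed.

Lemma cv_in (T : finType) m (c : nat -> T) k : 0 < m -> cv m c k \in hole_set m c.
Proof. by move=> m0; rewrite inE; apply/existsP; exists (Ordinal (ltn_pmod k m0)). Qed.

Lemma in_holeD (T : finType) m (c : nat -> T) j v : 0 < m -> v \in hole_set m c ->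
  exists2 t, t < m & v = cv m c (j + t).
Proof.
move=> m0; rewrite inE => /existsP [[k km] /= /eqP <-].
exists ((k + (m - j %% m)) %% m); first exact: ltn_pmod.
rewrite /cv modnDmr {1}(divn_eq j m).
have r : j %% m < m by exact: ltn_pmod.
move: (j %/ m) (j %% m) r => q r rm.
have -> : q * m + r + (k + (m - r)) = k + q.+1 * m by rewrite mulSn; lia.
by rewrite addnC modnMDl modn_small.
Qed.

Lemma adj_set (T : finType) (e : rel T) m c u S y : nbhd e u :&: hole_set m c = S ->
  y \in hole_set m c -> e u y = (y \in S).
Proof. by move=> <- yC; rewrite in_setI yC andbT inE. Qed.

Lemma set2_pat (T : finType) (e : rel T) m c u j a b : is_hole e m c -> a < m -> b < m ->
  (forall t, t < m -> e u (cv m c (j + t)) = (t == a) || (t == b)) ->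
  nbhd e u :&: hole_set m c = [set cv m c (j + a); cv m c (j + b)].
Proof.
move=> H am bm P; have m0 : 0 < m by have := hole_m H; lia.
apply/setP => v; rewrite in_setI in_set2; case vC: (v \in hole_set m c).
  case: (in_holeD j m0 vC) => t tm vE.
  by rewrite andbT inE vE P // !(cv_injD _ H).
rewrite andbF; apply/esym/negbTE; apply: contraFN vC => /orP [] /eqP ->; exact: cv_in.
Qed.

Lemma set1_pat (T : finType) (e : rel T) m c u j a : is_hole e m c -> a < m ->
  (forall t, t < m -> e u (cv m c (j + t)) = (t == a)) ->
  nbhd e u :&: hole_set m c = [set cv m c (j + a)].
Proof.
move=> H am P; rewrite -[[set _]]setUid; apply: set2_pat => // t tm; rewrite orbb; exact: P.
Qed.

Lemma pat_set2 (T : finType) (e : rel T) m c u j a b : is_hole e m c -> a < m -> b < m ->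
  nbhd e u :&: hole_set m c = [set cv m c (j + a); cv m c (j + b)] ->
  (forall t, t < m -> e u (cv m c (j + t)) = (t == a) || (t == b)).
Proof.
move=> H am bm E t tm; have m0 : 0 < m by have := hole_m H; lia.
by rewrite (adj_set E (cv_in _ _ m0)) in_set2 !(cv_injD _ H).
Qed.

Lemma pat_set1 (T : finType) (e : rel T) m c u j a : is_hole e m c -> a < m ->
  nbhd e u :&: hole_set m c = [set cv m c (j + a)] ->
  (forall t, t < m -> e u (cv m c (j + t)) = (t == a)).
Proof.
move=> H am E t tm; have m0 : 0 < m by have := hole_m H; lia.
by rewrite (adj_set E (cv_in _ _ m0)) in_set1 !(cv_injD _ H).
Qed.

Lemma inA (T : finType) (e : rel T) m c k v : 0 < m ->
  (v \in Aset e m c (k %% m)) =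
  (nbhd e v :&: hole_set m c == [set cv m c (k + (m - 1)); cv m c (k + 1)]).
Proof.
move=> m0; rewrite inE.
have -> : cv m c (k %% m + m - 1) = cv m c (k + (m - 1)).
  by apply: cv_eq; rewrite -addnBA // modnDml.
have -> : cv m c (k %% m).+1 = cv m c (k + 1).
  by apply: cv_eq; rewrite modSm addn1.
by [].
Qed.

Lemma inB (T : finType) (e : rel T) m c k v :
  (v \in Bset e m c (k %% m)) = (nbhd e v :&: hole_set m c == [set cv m c k]).
Proof.
rewrite inE; have -> : cv m c (k %% m) = cv m c k by apply: cv_eq; rewrite modn_mod.
by [].
Qed.

Lemma hole_nbhd (T : finType) (e : rel T) m c k : is_hole e m c ->
  nbhd e (cv m c k) :&: hole_set m c = [set cv m c (k + (m - 1)); cv m c (k + 1)].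
Proof.
move=> H; have m5 := hole_m H; have m0 : 0 < m by lia.
apply/setP => v; rewrite in_setI in_set2; case vC: (v \in hole_set m c).
  case: (in_holeD k m0 vC) => t tm vE.
  rewrite andbT inE vE !(cv_injD _ H) ?(ltn_predL) //; try lia.
  rewrite -[X in e (cv m c X)](addn0 k) (cv_adj_off _ H) //.
  rewrite (modn_small (_ : 1 < m)) //; last lia.
  case: (ltngtP t.+1 m) => tm'; first by rewrite (modn_small tm'); lia.
    lia.
  by rewrite tm' modnn; lia.
rewrite andbF; apply/esym/negbTE; apply: contraFN vC => /orP [] /eqP ->; exact: cv_in.
Qed.

Ltac fixrhs := match goal with |- ?l = ?r => let r2 := eval compute in r in change (l = r2) end.

Ltac enum_pairs := let a := fresh "a" in let b := fresh "b" in let Ha := fresh "Ha" in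
  let Hb := fresh "Hb" in
  move=> [a Ha] [b Hb] /=;
  case: a Ha => [|[|[|[|[|[|[|a]]]]]]] Ha //;
  case: b Hb => [|[|[|[|[|[|[|b]]]]]]] Hb //= _; fixrhs.

Lemma triangle (T : finType) (e : rel T) a b d : simple_graph e -> almost_bip_perm e ->
  e a b -> e b d -> e a d -> False.
Proof.
move=> S NB ab bd ad; case: NB => _ [_ [_ [NC3 _]]]; apply: NC3.
apply: (@mk_induced 3 _ (cyn 3) _ _ (fun i : 'I_3 => nth a [:: a; b; d] i)) => //.
enum_pairs; by [].
Qed.

Lemma m10 (T : finType) (e : rel T) m c : almost_bip_perm e -> shortest_hole e m c -> 10 <= m.
Proof.
move=> NB [H _]; have m5 := hole_m H; rewrite leqNgt; apply/negP => m9.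
case: NB => _ [_ [_ [_ NC]]]; apply: (NC m); first (apply/andP; split; lia).
case: H => _ [Hi Ha]; exists (fun k : 'I_m => c k); split.
  by move=> [x hx] [y hy] /= /(Hi _ _ hx hy) E; apply: val_inj.
by move=> [x hx] [y hy]; rewrite /= Ha.
Qed.

Lemma arc_hole (T : finType) (e : rel T) m c x J k : simple_graph e -> shortest_hole e m c ->
  x \notin hole_set m c -> e x (cv m c (J + 0)) -> e x (cv m c (J + k)) -> 3 <= k -> k + 3 <= m ->
  (forall t, 0 < t < k -> e x (cv m c (J + t)) = false) -> False.
Proof.
move=> [es ei] [H SH] xC x0 xk k3 km P.
have m5 := hole_m H.
have Ex : forall a, a <= k -> e x (cv m c (J + a)) = (a == 0) || (a == k).
  move=> a ak; case: (posnP a) => [->|a0]; first by rewrite x0.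
  case: (ltngtP a k) => [alt|//|->]; last by rewrite xk; lia.
    by rewrite P ?a0 ?alt //; apply/esym/negbTE; lia.
  lia.
have E2 : (k + 1).+1 %% (k + 2) = 0 by rewrite -addnS modnn.
set f := fun t => if t <= k then cv m c (J + t) else x.
have Hf : is_hole e (k + 2) f.
  split; first lia.
  split.
    move=> a b aL bL; rewrite /f; case: (leqP a k) => ak; case: (leqP b k) => bk.
    - by move/eqP; rewrite (cv_injD _ H); [move/eqP|lia|lia].
    - by move=> E; move: xC; rewrite -E cv_in //; lia.
    - by move=> E; move: xC; rewrite E cv_in //; lia.
    - lia.
  move=> a b aL bL; rewrite /f; case: (leqP a k) => ak; case: (leqP b k) => bk.
  - rewrite (cv_adjD _ H); try lia.
    rewrite (modn_small (_ : a.+1 < k + 2)); last lia.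
    rewrite (modn_small (_ : b.+1 < k + 2)); last lia.
    lia.
  - have -> : b = k + 1 by lia.
    rewrite es Ex // E2 (modn_small (_ : a.+1 < k + 2)); last lia.
    lia.
  - have -> : a = k + 1 by lia.
    rewrite Ex // E2 (modn_small (_ : b.+1 < k + 2)); last lia.
    lia.
  - have -> : a = k + 1 by lia.
    have -> : b = k + 1 by lia.
    rewrite ei E2; lia.
have := SH _ _ Hf; lia.
Qed.

Lemma gap (T : finType) (e : rel T) m c x J : simple_graph e -> almost_bip_perm e ->
  shortest_hole e m c ->
  x \notin hole_set m c -> e x (cv m c (J + 0)) -> e x (cv m c (J + 2)) = false ->
  forall k, 0 < k -> k + 2 < m -> e x (cv m c (J + k)) = false.
Proof.
move=> S NB SH xC x0 x2 k k0 km; apply/negP => xk.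
have m10' := m10 NB SH; have H := SH.1.
have ex : exists k, [&& 0 < k, k + 2 < m & e x (cv m c (J + k))].
  by exists k; rewrite k0 km xk.
case: (ex_minnP ex) => k1 /and3P [k10 k1m xk1] kmin.
case: (ltngtP k1 2) => [k1l|k1g|k1e]; last by rewrite k1e x2 in xk1.
  have k11 : k1 = 1 by lia.
  rewrite k11 in xk1; apply: (triangle S NB x0 _ xk1).
  by rewrite (cv_adjD _ H); lia.
apply: (arc_hole S SH xC x0 xk1) => //; try lia.
move=> t /andP [t0 tk]; apply/negP => xt.
have := kmin t; rewrite t0 xt /= => /(_ ltac:(lia)); lia.
Qed.

Ltac mlt := match goal with h : is_true (leq 10 ?m) |- is_true (leq _ ?m) => apply: (leq_trans _ h); done end.
Ltac cvtac H := rewrite (cv_adjD _ H); [done|mlt|mlt].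

Lemma classJ (T : finType) (e : rel T) m c x J : simple_graph e -> almost_bip_perm e ->
  shortest_hole e m c -> x \notin hole_set m c -> e x (cv m c (J + 0)) ->
  [\/ forall t, t < m -> e x (cv m c (J + t)) = (t == 0),
      forall t, t < m -> e x (cv m c (J + t)) = (t == 0) || (t == 2) |
      forall t, t < m -> e x (cv m c (J + t)) = (t == 0) || (t == m - 2)].
Proof.
move=> S NB SH xC x0.
have m10' := m10 NB SH; have H := SH.1.
have F1 : e x (cv m c (J + 1)) = false.
  apply/negP => x1; apply: (triangle S NB x0 _ x1); cvtac H.
have F2 : e x (cv m c (J + (m - 1))) = false.
  apply/negP => x1; apply: (triangle S NB x1 _ x0).
  rewrite (cv_adj_off _ H); try lia.
  rewrite (_ : (m - 1).+1 = m); last lia.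
  by rewrite modnn.
case x2: (e x (cv m c (J + 2))).
  case x4: (e x (cv m c (J + 4))).
    have x6 : e x (cv m c (J + 6)).
      apply/negP => /negP /negbTE x6.
      have G4 : forall k, 0 < k -> k + 2 < m -> e x (cv m c (J + 4 + k)) = false.
        by apply: gap => //; [rewrite addn0 | rewrite -addnA].
      have := G4 (m - 4) ltac:(lia) ltac:(lia).
      rewrite (cv_shift c (_ : J + 4 + (m - 4) = J + 0 + 1 * m)); last lia.
      by rewrite x0.
    have F3 : e x (cv m c (J + 3)) = false.
      apply/negP => x3; apply: (triangle S NB x3 _ x4); cvtac H.
    have F7 : e x (cv m c (J + 7)) = false.
      apply/negP => x7; apply: (triangle S NB x7 _ x6); cvtac H.
    exfalso; case: NB => NT2 _; apply: NT2.
    apply: (@mk_induced 7 _ (eln [:: (0,4); (4,1); (0,5); (5,2); (0,6); (6,3)]) _ _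
      (fun i : 'I_7 => nth x [:: x; cv m c (J + 1); cv m c (J + 3); cv m c (J + 7);
                                  cv m c (J + 0); cv m c (J + 4); cv m c (J + 6)] i)) => //.
    enum_pairs; first [assumption | (rewrite (proj1 S); assumption) | cvtac H].
  apply: Or32 => t tm.
  case: (ltngtP t 2) => [t2|t2|->]; last by rewrite x2.
    by case: t t2 {tm} => [|[|]] // _; rewrite ?x0 ?F1.
  have G2 : forall k, 0 < k -> k + 2 < m -> e x (cv m c (J + 2 + k)) = false.
    by apply: gap => //; [rewrite addn0 | rewrite -addnA].
  have := G2 (t - 2) ltac:(lia) ltac:(lia).
  rewrite (_ : J + 2 + (t - 2) = J + t); last lia.
  move=> ->; lia.
have G := gap S NB SH xC x0 x2.
case xm: (e x (cv m c (J + (m - 2)))).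
  apply: Or33 => t tm.
  case: (posnP t) => [->|t0]; first by rewrite x0.
  case: (ltngtP t (m - 2)) => [t2|t2|->]; last by rewrite xm; lia.
    by rewrite G //; lia.
  have -> : t = m - 1 by lia.
  by rewrite F2; lia.
apply: Or31 => t tm.
case: (posnP t) => [->|t0]; first by rewrite x0.
case: (ltngtP t (m - 2)) => [t2|t2|->]; last by rewrite xm; lia.
  by rewrite G //; lia.
have -> : t = m - 1 by lia.
by rewrite F2; lia.
Qed.

Lemma classify (T : finType) (e : rel T) m c x j : simple_graph e -> almost_bip_perm e ->
  shortest_hole e m c -> x \notin hole_set m c -> e x (cv m c (j + 2)) ->
  [\/ forall t, t < m -> e x (cv m c (j + t)) = (t == 2),
      forall t, t < m -> e x (cv m c (j + t)) = (t == 2) || (t == 4) |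
      forall t, t < m -> e x (cv m c (j + t)) = (t == 0) || (t == 2)].
Proof.
move=> S NB SH xC x2.
have m10' := m10 NB SH.
have x0 : e x (cv m c (j + 2 + 0)) by rewrite addn0.
have R : forall t, t < m -> exists2 s, s < m & cv m c (j + t) = cv m c (j + 2 + s) /\
            (if 2 <= t then s = t - 2 else s = t + m - 2).
  move=> t tm; case: (leqP 2 t) => t2.
    exists (t - 2); first lia.
    split; first by congr (cv m c _); lia.
    by [].
  exists (t + m - 2); first lia.
  split; first by apply/esym/(@cv_shift _ _ c 1); lia.
  by [].
have Q : forall (p : nat -> bool) (q : nat -> bool),
   (forall t, t < m -> e x (cv m c (j + 2 + t)) = p t) ->
   (forall t s, t < m -> s < m -> (if 2 <= t then s = t - 2 else s = t + m - 2) -> p s = q t) ->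
   forall t, t < m -> e x (cv m c (j + t)) = q t.
  move=> p q P PQ t tm; case: (R t tm) => s sm [-> st].
  by rewrite P // (PQ t s).
case: (classJ S NB SH xC x0) => P.
- apply: Or31; apply: (Q _ _ P) => t s tm sm; case: (leqP 2 t) => h ->; lia.
- apply: Or32; apply: (Q _ _ P) => t s tm sm; case: (leqP 2 t) => h ->; lia.
- apply: Or33; apply: (Q _ _ P) => t s tm sm; case: (leqP 2 t) => h ->; lia.
Qed.

Ltac cvm := first [ (congr (cv _ _ _); lia) | (apply: (cv_shift _ (n := 1)); lia)
  | (apply/esym; apply: (cv_shift _ (n := 1)); lia) | (apply: (cv_shift _ (n := 2)); lia)
  | (apply/esym; apply: (cv_shift _ (n := 2)); lia) ].

Lemma c_in (T : finType) m (c : nat -> T) b : b < m -> c b \in hole_set m c.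
Proof. by move=> bm; rewrite inE; apply/existsP; exists (Ordinal bm). Qed.

Lemma A_pat (T : finType) (e : rel T) m c i j u : is_hole e m c -> i < m -> j + 2 = i + m ->
  u \in Aset e m c (i %% m) -> forall t, t < m -> e u (cv m c (j + t)) = (t == 1) || (t == 3).
Proof.
move=> H im jE; have m5 := hole_m H.
rewrite inA; last lia.
have -> : cv m c (i + (m - 1)) = cv m c (j + 1) by cvm.
have -> : cv m c (i + 1) = cv m c (j + 3) by cvm.
move/eqP; apply: pat_set2 => //; lia.
Qed.

Lemma B_pat (T : finType) (e : rel T) m c i j u : is_hole e m c -> i < m -> j + 2 = i + m ->
  u \in Bset e m c (i %% m) -> forall t, t < m -> e u (cv m c (j + t)) = (t == 2).
Proof.
move=> H im jE; have m5 := hole_m H.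
rewrite inB.
have -> : cv m c i = cv m c (j + 2) by cvm.
move/eqP; apply: pat_set1 => //; lia.
Qed.

Ltac ptac S P := first [ (rewrite P; [done|mlt]) | (rewrite (proj1 S) P; [done|mlt]) ].

Lemma AB_adj (T : finType) (e : rel T) m c i u w : simple_graph e -> almost_bip_perm e ->
  shortest_hole e m c -> i < m ->
  u \in Aset e m c (i %% m) -> w \in Bset e m c (i %% m) -> e u w.
Proof.
move=> S NB SH im uA wB; have H := SH.1; have m10' := m10 NB SH.
set j := i + m - 2; have jE : j + 2 = i + m by rewrite /j; lia.
have U := A_pat H im jE uA; have W := B_pat H im jE wB.
apply/negP => /negP /negbTE uw.
case: NB => _ [NX2 _]; apply: NX2.
apply: (@mk_induced 7 _ (eln [:: (0,1); (1,2); (2,3); (3,0); (0,4); (1,5); (2,6)]) _ _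
   (fun k : 'I_7 => nth u [:: cv m c (j + 1); cv m c (j + 2); cv m c (j + 3); u;
                              cv m c (j + 0); w; cv m c (j + 4)] k)) => //.
enum_pairs; first [assumption | (rewrite (proj1 S); assumption) | cvtac H | ptac S U | ptac S W].
Qed.

Lemma A_in_C (T : finType) (e : rel T) m c j u : is_hole e m c -> 10 <= m ->
  (forall t, t < m -> e u (cv m c (j + t)) = (t == 1) || (t == 3)) ->
  u \in hole_set m c -> u = cv m c (j + 2).
Proof.
move=> H m10' U uC; have m0 : 0 < m by lia.
case: (in_holeD j m0 uC) => t tm ut; rewrite ut in U *.
have U1 := U 1 ltac:(lia); have U3 := U 3 ltac:(lia).
rewrite !(cv_adj_off _ H) in U1 U3; try lia.
have t2 : t = 2.
  move: U1 U3; rewrite (modn_small (_ : 2 < m)); last lia.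
  rewrite (modn_small (_ : 4 < m)); last lia.
  case: (ltngtP t.+1 m) => h.
  - rewrite (modn_small h); lia.
  - lia.
  - rewrite h modnn; lia.
by rewrite t2.
Qed.

Lemma c_eq_cv (T : finType) (e : rel T) m c b X : is_hole e m c -> b < m ->
  (c b == cv m c X) = (b == X %% m).
Proof.
move=> H bm; have m0 : 0 < m by have := hole_m H; lia.
apply/eqP/eqP => [E|->]; last by [].
by case: H => _ [Hi _]; apply: Hi => //; exact: ltn_pmod.
Qed.

Lemma predmod m i b : 0 < m -> i < m -> b < m -> (b == (i + (m - 1)) %% m) = (b.+1 %% m == i).
Proof.
move=> m0 im bm.
have -> : (i + (m - 1)) %% m = if i == 0 then m - 1 else i - 1.
  case: eqP => [->|i0]; first by rewrite add0n modn_small //; lia.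
  by rewrite (_ : i + (m - 1) = i - 1 + m); [rewrite modnDr modn_small //; lia | lia].
case: (ltngtP b.+1 m) => h.
- rewrite (modn_small h); case: (eqVneq i 0) => i0; lia.
- lia.
- rewrite h modnn; case: (eqVneq i 0) => i0; lia.
Qed.

Lemma Hu_of_A (T : finType) (e : rel T) m c i u : is_hole e m c -> i < m ->
  u \in Aset e m c (i %% m) ->
  forall b, b < m -> e u (c b) = (b.+1 %% m == i) || (i.+1 %% m == b).
Proof.
move=> H im uA b bm; have m0 : 0 < m by have := hole_m H; lia.
move: uA; rewrite inA // => /eqP E.
rewrite (adj_set E (c_in _ bm)) in_set2 !(c_eq_cv _ H) // predmod //.
by rewrite addn1 (eq_sym b).
Qed.

Lemma replace_hole (T : finType) (e : rel T) m c i u : simple_graph e -> shortest_hole e m c ->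
  i < m -> (u \notin hole_set m c \/ u = c i) ->
  (forall b, b < m -> e u (c b) = (b.+1 %% m == i) || (i.+1 %% m == b)) ->
  shortest_hole e m (fun k => if k == i then u else c k).
Proof.
move=> [es ei] [[m5 [Hi Ha]] SH] im uC Hu.
have m0: 0 < m by lia.
have ni : (i.+1 %% m == i) = false.
  case: (ltngtP i.+1 m) => h; [rewrite modn_small //; lia | lia | rewrite h modnn; lia].
split => //; split => //; split.
  move=> a b am bm; case: (eqVneq a i) => [->|ai]; case: (eqVneq b i) => [->|bi] //=;
    rewrite ?eqxx ?(negbTE ai) ?(negbTE bi).
  - move=> E; case: uC => [uC|uci].
      by move: uC; rewrite E c_in.
    by rewrite uci in E; move: (Hi _ _ im bm E) bi => ->; rewrite eqxx.
  - move=> E; case: uC => [uC|uci].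
      by move: uC; rewrite -E c_in.
    by rewrite uci in E; move: (Hi _ _ am im E) ai => ->; rewrite eqxx.
  - exact: Hi.
move=> a b am bm; case: (eqVneq a i) => [->|ai]; case: (eqVneq b i) => [->|bi] //=;
  rewrite ?eqxx ?(negbTE ai) ?(negbTE bi).
- by rewrite ei ni.
- by rewrite Hu // orbC.
- by rewrite es Hu.
- exact: Ha.
Qed.

Lemma cv_repl (T : finType) m (c : nat -> T) i u j t : 2 < m -> i < m -> j + 2 = i + m -> t < m ->
  cv m (fun k => if k == i then u else c k) (j + t) = if t == 2 then u else cv m c (j + t).
Proof.
move=> m2 im jE tm; rewrite /cv.
have -> : ((j + t) %% m == i) = (t == 2).
  have -> : i = (j + 2) %% m by rewrite jE modnDr modn_small.
  by rewrite eqn_modDl !modn_small.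
by [].
Qed.

Lemma hole_repl (T : finType) m (c : nat -> T) i u v :
  v \in hole_set m (fun k => if k == i then u else c k) -> v = u \/ v \in hole_set m c.
Proof.
rewrite inE => /existsP [k]; case: ifP => _ /eqP <-; first by left.
by right; rewrite inE; apply/existsP; exists k.
Qed.

Lemma set2E (T : finType) (a b a' b' : T) : a = a' -> b = b' -> [set a; b] == [set a'; b'].
Proof. by move=> -> ->. Qed.
Lemma set1E (T : finType) (a a' : T) : a = a' -> [set a] == [set a'].
Proof. by move=> ->. Qed.

Lemma A_nbhd (T : finType) (e : rel T) m c i u x : simple_graph e -> almost_bip_perm e ->
  shortest_hole e m c -> i < m -> u \in Aset e m c (i %% m) -> e u x ->
  x \in Bset e m c ((i + m - 2) %% m) :|: Aset e m c ((i + m - 1) %% m) :|: Bset e m c (i %% m)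
        :|: Aset e m c (i.+1 %% m) :|: Bset e m c (i.+2 %% m).
Proof.
move=> S NB SH im uA ux; have H := SH.1; have m10' := m10 NB SH.
have m0 : 0 < m by lia.
set j := i + m - 2; have jE : j + 2 = i + m by rewrite /j; lia.
have U := A_pat H im jE uA.
case xC: (x \in hole_set m c).
  case: (in_holeD j m0 xC) => t tm xt; rewrite xt in ux *.
  have := U t tm; rewrite ux => /esym /orP [] /eqP ->.
    have xA : cv m c (j + 1) \in Aset e m c ((i + m - 1) %% m).
      rewrite inA // hole_nbhd //; apply: set2E; cvm.
    by rewrite !in_setU xA /= ?orbT.
  have xA : cv m c (j + 3) \in Aset e m c (i.+1 %% m).
    rewrite inA // hole_nbhd //; apply: set2E; cvm.
  by rewrite !in_setU xA /= ?orbT.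
have uC : u \notin hole_set m c \/ u = c i.
  case uC: (u \in hole_set m c); [right | by left].
  rewrite (A_in_C H m10' U uC) (_ : cv m c (j + 2) = cv m c i); last by cvm.
  by rewrite /cv modn_small.
set c' := fun k => if k == i then u else c k.
have SH' : shortest_hole e m c' := replace_hole S SH im uC (Hu_of_A H im uA).
have xC' : x \notin hole_set m c'.
  apply/negP => /hole_repl [xu|]; last by rewrite xC.
  by move: ux; rewrite xu (proj2 S).
have x2' : e x (cv m c' (j + 2)).
  by rewrite /c' cv_repl //; try lia; rewrite (proj1 S).
have R : forall p : nat -> bool, (forall t, t < m -> e x (cv m c' (j + t)) = p t) ->
   forall t, t < m -> t != 2 -> e x (cv m c (j + t)) = p t.
  move=> p P t tm t2; rewrite -P // /c' cv_repl //; try lia.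
  by rewrite (negbTE t2).
have Pat : forall p : nat -> bool, (forall t, t < m -> e x (cv m c' (j + t)) = p t) ->
   p 2 -> e x (cv m c (j + 2)) ->
   forall t, t < m -> e x (cv m c (j + t)) = p t.
  move=> p P p2 x2 t tm; case: (eqVneq t 2) => [->|t2]; first by rewrite x2 p2.
  exact: R.
have Pat' : forall p : nat -> bool, (forall t, t < m -> e x (cv m c' (j + t)) = p t) ->
   e x (cv m c (j + 2)) = false ->
   forall t, t < m -> e x (cv m c (j + t)) = (t != 2) && p t.
  move=> p P x2 t tm; case: (eqVneq t 2) => [->|t2]; first by rewrite x2.
  exact: R.
case: (classify S NB SH' xC' x2') => P; case x2: (e x (cv m c (j + 2))).
- have xB : x \in Bset e m c (i %% m).
    rewrite inB (set1_pat (j := j) (a := 2) H) //; try lia; last by apply: Pat.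
    apply: set1E; cvm.
  by rewrite !in_setU xB /= ?orbT.
- exfalso; have F := R _ P.
  case: NB => _ [NX2 _]; apply: NX2.
  apply: (@mk_induced 7 _ (eln [:: (0,1); (1,2); (2,3); (3,0); (0,4); (1,5); (2,6)]) _ _
     (fun k : 'I_7 => nth u [:: cv m c (j + 1); u; cv m c (j + 3); cv m c (j + 2);
                                cv m c (j + 0); x; cv m c (j + 4)] k)) => //.
  enum_pairs; first [assumption | (rewrite (proj1 S); assumption) | cvtac H | ptac S U
     | (rewrite F; [done|mlt|done]) | (rewrite (proj1 S) F; [done|mlt|done])].
- have xA : x \in Aset e m c (i.+1 %% m).
    rewrite inA // (set2_pat (j := j) (a := 2) (b := 4) H) //; try lia; last by apply: Pat.
    apply: set2E; cvm.
  by rewrite !in_setU xA /= ?orbT.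
- have xB : x \in Bset e m c (i.+2 %% m).
    rewrite inB (set1_pat (j := j) (a := 4) H) //; try lia.
      apply: set1E; cvm.
    move=> t tm; rewrite (Pat' _ P) //; lia.
  by rewrite !in_setU xB /= ?orbT.
- have xA : x \in Aset e m c ((i + m - 1) %% m).
    rewrite inA // (set2_pat (j := j) (a := 0) (b := 2) H) //; try lia; last by apply: Pat.
    apply: set2E; cvm.
  by rewrite !in_setU xA /= ?orbT.
- have xB : x \in Bset e m c ((i + m - 2) %% m).
    rewrite inB (set1_pat (j := j) (a := 0) H) //; try lia.
      apply: set1E; cvm.
    move=> t tm; rewrite (Pat' _ P) //; lia.
  by rewrite !in_setU xB /= ?orbT.
Qed.

Lemma B_nbhd (T : finType) (e : rel T) m c i w x : simple_graph e -> almost_bip_perm e ->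
  shortest_hole e m c -> i < m -> w \in Bset e m c (i %% m) -> e w x ->
  x \in Aset e m c ((i + m - 2) %% m) :|: Bset e m c ((i + m - 1) %% m) :|: Aset e m c (i %% m)
        :|: Bset e m c (i.+1 %% m) :|: Aset e m c (i.+2 %% m).
Proof.
move=> S NB SH im wB wx; have H := SH.1; have m10' := m10 NB SH.
have m0 : 0 < m by lia.
set j := i + m - 2; have jE : j + 2 = i + m by rewrite /j; lia.
have W := B_pat H im jE wB.
case xC: (x \in hole_set m c).
  case: (in_holeD j m0 xC) => t tm xt; rewrite xt in wx *.
  have := W t tm; rewrite wx => /esym /eqP ->.
  have xA : cv m c (j + 2) \in Aset e m c (i %% m).
    rewrite inA // hole_nbhd //; apply: set2E; cvm.
  by rewrite !in_setU xA /= ?orbT.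
have F2 : e x (cv m c (j + 2)) = false.
  apply/negP => x2; apply: (triangle S NB wx x2); rewrite W //; lia.
have x13 : e x (cv m c (j + 1)) || e x (cv m c (j + 3)).
  apply: contraT; rewrite negb_or => /andP [/negbTE F1 /negbTE F3]; exfalso.
  case x4: (e x (cv m c (j + 4))).
    case: NB => _ [_ [_ [_ NC]]]; apply: (NC 5) => //.
    apply: (@mk_induced 5 _ (cyn 5) _ _
       (fun k : 'I_5 => nth w [:: w; cv m c (j + 2); cv m c (j + 3); cv m c (j + 4); x] k)) => //.
    enum_pairs; first [assumption | (rewrite (proj1 S); assumption) | cvtac H | ptac S W].
  case x0: (e x (cv m c (j + 0))).
    case: NB => _ [_ [_ [_ NC]]]; apply: (NC 5) => //.
    apply: (@mk_induced 5 _ (cyn 5) _ _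
       (fun k : 'I_5 => nth w [:: w; cv m c (j + 2); cv m c (j + 1); cv m c (j + 0); x] k)) => //.
    enum_pairs; first [assumption | (rewrite (proj1 S); assumption) | cvtac H | ptac S W].
  case: NB => NT2 _; apply: NT2.
  apply: (@mk_induced 7 _ (eln [:: (0,4); (4,1); (0,5); (5,2); (0,6); (6,3)]) _ _
    (fun k : 'I_7 => nth x [:: cv m c (j + 2); x; cv m c (j + 0); cv m c (j + 4);
                                w; cv m c (j + 1); cv m c (j + 3)] k)) => //.
  enum_pairs; first [assumption | (rewrite (proj1 S); assumption) | cvtac H | ptac S W].
case x3: (e x (cv m c (j + 3))).
  have x3' : e x (cv m c (j + 1 + 2)) by rewrite -addnA.
  case: (classify S NB SH (negbT xC) x3') => P.
  - have xB : x \in Bset e m c (i.+1 %% m).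
      rewrite inB (set1_pat (j := j + 1) (a := 2) H) //; try lia.
      apply: set1E; cvm.
    by rewrite !in_setU xB /= ?orbT.
  - have xA : x \in Aset e m c (i.+2 %% m).
      rewrite inA // (set2_pat (j := j + 1) (a := 2) (b := 4) H) //; try lia.
      apply: set2E; cvm.
    by rewrite !in_setU xA /= ?orbT.
  - have xA : x \in Aset e m c (i %% m).
      rewrite inA // (set2_pat (j := j + 1) (a := 0) (b := 2) H) //; try lia.
      apply: set2E; cvm.
    by rewrite !in_setU xA /= ?orbT.
rewrite x3 orbF in x13.
set j' := i + m - 3.
have x1' : e x (cv m c (j' + 2)) by rewrite (_ : j' + 2 = j + 1) //; rewrite /j' /j; lia.
case: (classify S NB SH (negbT xC) x1') => P.
- have xB : x \in Bset e m c ((i + m - 1) %% m).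
    rewrite inB (set1_pat (j := j') (a := 2) H) //; try lia.
    apply: set1E; cvm.
  by rewrite !in_setU xB /= ?orbT.
- have xA : x \in Aset e m c (i %% m).
    rewrite inA // (set2_pat (j := j') (a := 2) (b := 4) H) //; try lia.
    apply: set2E; cvm.
  by rewrite !in_setU xA /= ?orbT.
- have xA : x \in Aset e m c ((i + m - 2) %% m).
    rewrite inA // (set2_pat (j := j') (a := 0) (b := 2) H) //; try lia.
    apply: set2E; cvm.
  by rewrite !in_setU xA /= ?orbT.
Qed.

Lemma A_indep (T : finType) (e : rel T) m c i : simple_graph e -> almost_bip_perm e ->
  shortest_hole e m c -> independent e (Aset e m c (i %% m)).
Proof.
move=> S NB SH u v uA vA; have H := SH.1; have m0 : 0 < m by have := hole_m H; lia.
move: uA vA; rewrite !inA // => /eqP Eu /eqP Ev.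
have yC := cv_in c (i + 1) m0.
have uy : e u (cv m c (i + 1)) by rewrite (adj_set Eu yC) !inE eqxx orbT.
have vy : e v (cv m c (i + 1)) by rewrite (adj_set Ev yC) !inE eqxx orbT.
apply/negP => uv; apply: (triangle S NB uv vy uy).
Qed.

Lemma B_indep (T : finType) (e : rel T) m c i : simple_graph e -> almost_bip_perm e ->
  shortest_hole e m c -> independent e (Bset e m c (i %% m)).
Proof.
move=> S NB SH u v uA vA; have H := SH.1; have m0 : 0 < m by have := hole_m H; lia.
move: uA vA; rewrite !inB // => /eqP Eu /eqP Ev.
have yC := cv_in c i m0.
have uy : e u (cv m c i) by rewrite (adj_set Eu yC) !inE eqxx.
have vy : e v (cv m c i) by rewrite (adj_set Ev yC) !inE eqxx.
apply/negP => uv; apply: (triangle S NB uv vy uy).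
Qed.

Theorem proposition3p5 (T : finType) (e : rel T) (m : nat) (c : nat -> T) :
  simple_graph e -> connected_graph e -> almost_bip_perm e ->
  shortest_hole e m c ->
  forall i, i < m ->
    let A := fun k => Aset e m c (k %% m) in
    let B := fun k => Bset e m c (k %% m) in
    [/\ independent e (A i) /\ independent e (B i),
        (forall u w, u \in A i -> w \in B i -> e u w),
        (forall u, u \in A i ->
           B i \subset nbhd e u /\
           nbhd e u \subset
             B (i + m - 2) :|: A (i + m - 1) :|: B i :|: A i.+1 :|: B i.+2) &
        (forall w, w \in B i ->
           A i \subset nbhd e w /\
           nbhd e w \subset
             A (i + m - 2) :|: B (i + m - 1) :|: A i :|: B i.+1 :|: A i.+2)].
Proof.
move=> S _ NB SH i im A B; rewrite /A /B.
split.
- by split; [apply: A_indep | apply: B_indep].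
- by move=> u w; apply: AB_adj.
- move=> u uA; split.
    by apply/subsetP => w wB; rewrite inE; apply: (AB_adj S NB SH im uA wB).
  by apply/subsetP => x; rewrite inE => ux; apply: (A_nbhd S NB SH im uA ux).
- move=> w wB; split.
    apply/subsetP => u uA; rewrite inE (proj1 S); exact: (AB_adj S NB SH im uA wB).
  by apply/subsetP => x; rewrite inE => ux; apply: (B_nbhd S NB SH im wB ux).
Qed.
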